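(* An algebra $(A,\circ,-,\sqcup)$ is a minus-algebra with override if and only if it satisfies all the defining laws of a minus-algebra with override except the quasi-identity $s-x=t-x\ \&\ x\circ s=x\circ t\Rightarrow s=t$, together with the identity $x=(y\circ x)\sqcup(x-y)$. Hence the class of minus-algebras with override is a finitely based variety, and so is the class of minus-semigroups with override (obtained by further adding an associative operation $\cdot$ and the identity $s(t-u)=st-su$).
   Context: A minus-algebra $(A,\circ,-)$ satisfies: $x\circ y=y-(y-x)$; $(A,\circ)$ is a right normal band (semigroup with $x\circ x=x$, $(x\circ y)\circ z=(y\circ x)\circ z$); there is an element $0$ with $x-x=0$ for all $x$; $x\circ0=0\circ x=0$; $(x-y)\circ x=x-y$; $(x-y)\circ y=0$; $(x-y)\circ z=(x\circ z)-y$; and the quasi-identity $s-x=t-x\ \&\ x\circ s=x\circ t\Rightarrow s=t$. A minus-algebra with override is a minus-algebra with a binary operation $\sqcup$ satisfying $(x\sqcup y)-x=y-x$ and $x\circ(x\sqcup y)=x$. A minus-semigroup with override is a minus-algebra with override with an associative operation $\cdot$ (juxtaposition) satisfying $s(t-u)=st-su$. *)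

(* Defs.v *)
Section MinusAlgebra.
Variable A : Type.
Variables (circ minus : A -> A -> A).

Definition right_normal_band : Prop :=
  (forall x y z, circ (circ x y) z = circ x (circ y z)) /\
  (forall x, circ x x = x) /\
  (forall x y z, circ (circ x y) z = circ (circ y x) z).

Definition minus_algebra_laws : Prop :=
  (forall x y, circ x y = minus y (minus y x)) /\
  right_normal_band /\
  (exists z : A,
     (forall x, minus x x = z) /\
     (forall x, circ x z = z /\ circ z x = z) /\
     (forall x y, circ (minus x y) x = minus x y) /\
     (forall x y, circ (minus x y) y = z) /\
     (forall x y w, circ (minus x y) w = minus (circ x w) y)).

Definition minus_quasi_identity : Prop :=
  forall s t x, minus s x = minus t x -> circ x s = circ x t -> s = t.

Definition minus_algebra : Prop := minus_algebra_laws /\ minus_quasi_identity.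

Variable join : A -> A -> A.

Definition override_laws : Prop :=
  (forall x y, minus (join x y) x = minus y x) /\
  (forall x y, circ x (join x y) = x).

Definition minus_algebra_with_override : Prop :=
  minus_algebra /\ override_laws.

Definition override_decomposition : Prop :=
  forall x y, x = join (circ y x) (minus x y).

Variable mul : A -> A -> A.

Definition minus_semigroup_laws : Prop :=
  (forall s t u, mul (mul s t) u = mul s (mul t u)) /\
  (forall s t u, mul s (minus t u) = minus (mul s t) (mul s u)).

Definition minus_semigroup_with_override : Prop :=
  minus_algebra_with_override /\ minus_semigroup_laws.

End MinusAlgebra.

(* Main.v *)
Require Import Defs.

Lemma part1 (A : Type) (circ minus join : A -> A -> A) :
  minus_algebra_with_override A circ minus join <->
  (minus_algebra_laws A circ minus /\ override_laws A circ minus join /\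
   override_decomposition A circ minus join).
Proof.
  split.
  - intros [[La Q] Lo]. split; [exact La|]. split; [exact Lo|].
    destruct La as [D [[As [Id RN]] [z [H0 [Hz [H1 [H2 H3]]]]]]].
    destruct Lo as [O1 O2].
    assert (C : forall p q, circ p q = z -> circ q p = z).
    { intros p q E. rewrite <- (Id p), <- As, RN, E. apply (proj2 (Hz _)). }
    assert (L1 : forall p q, circ q p = z -> minus p q = p).
    { intros p q E. apply (Q _ _ (minus p q)).
      - rewrite H0, <- D, E. reflexivity.
      - rewrite Id, H1. reflexivity. }
    intros x y.
    set (a := circ y x). set (b := minus x y).
    assert (Ha : minus x a = b).
    { unfold a, b. rewrite D. rewrite <- D. apply H1. }
    assert (Hab : circ a b = z).
    { unfold a, b. rewrite RN, As. rewrite (C _ _ (H2 x y)). apply (proj1 (Hz _)). }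
    apply (Q _ _ a).
    + rewrite O1, Ha. symmetry. apply L1. exact Hab.
    + rewrite O2. unfold a. rewrite As, Id. reflexivity.
  - intros [La [Lo Dc]]. split; [split; [exact La|] | exact Lo].
    intros s t x E1 E2. rewrite (Dc s x), (Dc t x), E1, E2. reflexivity.
Qed.

Theorem proposition5p4 :
  (forall (A : Type) (circ minus join : A -> A -> A),
     minus_algebra_with_override A circ minus join <->
     (minus_algebra_laws A circ minus /\ override_laws A circ minus join /\
      override_decomposition A circ minus join)) /\
  (forall (A : Type) (circ minus join mul : A -> A -> A),
     minus_semigroup_with_override A circ minus join mul <->
     (minus_algebra_laws A circ minus /\ override_laws A circ minus join /\
      override_decomposition A circ minus join /\
      minus_semigroup_laws A minus mul)).
Proof.
  split; [exact part1|].
  intros A circ minus join mul. unfold minus_semigroup_with_override.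
  pose proof (part1 A circ minus join). tauto.
Qed.
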